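(* Let $G$ be a $k$-monotone bipartite $\epsilon$-expander with ordered bipartition $A=(v_1,\dots,v_n)$ and $B=(w_1,\dots,w_m)$ (so $n=m$). Let $G'$ be the graph with $V(G')=V(G)$ and $E(G')=\{v_iw_j,\ v_jw_i : v_iw_j\in E(G)\}$. Then $G'$ is a two-sided $2k$-monotone bipartite $\epsilon$-expander (with respect to the same ordered bipartition).
   Context: For $\epsilon\in(0,1]$, a bipartite graph $G$ with bipartition $A,B$ is a bipartite $\epsilon$-expander if $|A|=|B|$ and $|N(S)|\geq(1+\epsilon)|S|$ for every $S\subset A$ with $|S|\leq|A|/2$, where $N(S)$ is the set of vertices adjacent to some vertex of $S$. It is a two-sided bipartite $\epsilon$-expander if additionally $|N(T)|\geq(1+\epsilon)|T|$ for every $T\subset B$ with $|T|\leq|B|/2$. For a bipartite graph with ordered colour classes $(v_1,\dots,v_n)$ and $(w_1,\dots,w_m)$, edges $v_iw_j$ and $v_kw_\ell$ cross if $i<k$ and $\ell<j$; a matching is monotone if no two of its edges cross; the graph is $d$-monotone if its edge set is the union of $d$ monotone matchings. *)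

(* Defs.v *)
From HB Require Import structures.
From mathcomp Require Import all_boot all_order all_algebra.
Set Implicit Arguments. Unset Strict Implicit. Unset Printing Implicit Defensive.
Import Order.TTheory GRing.Theory Num.Theory.

(* A bipartite graph with ordered colour classes A = (v_0,...,v_{n-1}) and
   B = (w_0,...,w_{m-1}) is given by its edge set E : {set 'I_n * 'I_m};
   the pair (i, j) stands for the edge v_i w_j. *)

Section Bip.
Variables n m : nat.
Implicit Types (E M : {set 'I_n * 'I_m}).

Definition nbrA E (S : {set 'I_n}) : {set 'I_m} :=
  [set j | [exists i in S, (i, j) \in E]].
Definition nbrB E (T : {set 'I_m}) : {set 'I_n} :=
  [set i | [exists j in T, (i, j) \in E]].

Definition cross (e f : 'I_n * 'I_m) : bool := (e.1 < f.1)%N && (f.2 < e.2)%N.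

Definition is_matching M : Prop :=
  forall e f, e \in M -> f \in M -> e != f -> (e.1 != f.1) && (e.2 != f.2).

Definition monotone_matching M : Prop :=
  is_matching M /\ forall e f, e \in M -> f \in M -> ~~ cross e f.

Definition d_monotone (d : nat) E : Prop :=
  exists Ms : 'I_d -> {set 'I_n * 'I_m},
    (forall t, monotone_matching (Ms t)) /\ E = \bigcup_(t < d) Ms t.
End Bip.

Local Open Scope ring_scope.

Definition bip_expander (R : realFieldType) (eps : R) (n : nat)
  (E : {set 'I_n * 'I_n}) : Prop :=
  forall S : {set 'I_n}, (#|S|%:R <= n%:R / 2 :> R) ->
    (1 + eps) * #|S|%:R <= #|nbrA E S|%:R.

Definition two_sided_bip_expander (R : realFieldType) (eps : R) (n : nat)
  (E : {set 'I_n * 'I_n}) : Prop :=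
  bip_expander eps E /\
  forall T : {set 'I_n}, (#|T|%:R <= n%:R / 2 :> R) ->
    (1 + eps) * #|T|%:R <= #|nbrB E T|%:R.

Definition symmetrize (n : nat) (E : {set 'I_n * 'I_n}) : {set 'I_n * 'I_n} :=
  [set p | (p \in E) || ((p.2, p.1) \in E)].

(* Main.v *)
Require Import Defs.
From mathcomp Require Import zify.
From mathcomp Require Import all_boot all_order all_algebra.
Import Order.TTheory GRing.Theory Num.Theory.
Local Open Scope ring_scope.
Set Implicit Arguments.

Definition trs (n : nat) (M : {set 'I_n * 'I_n}) : {set 'I_n * 'I_n} :=
  [set p | (p.2, p.1) \in M].

Lemma tr_mono n (M : {set 'I_n * 'I_n}) :
  monotone_matching M -> monotone_matching (trs M).
Proof.
case=> Hm Hc; split.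
- move=> e f; rewrite !inE => He Hf Hne.
  have Hne' : (e.2, e.1) != (f.2, f.1).
  { apply: contra Hne => /eqP [h1 h2].
    by case: e f {He Hf} h1 h2 => [a b] [c d] /= -> ->. }
  have := Hm _ _ He Hf Hne'. by rewrite /= andbC.
- move=> e f; rewrite !inE => He Hf. have := Hc _ _ Hf He.
  by rewrite /cross /= andbC.
Qed.

Lemma mono0 n : monotone_matching (set0 : {set 'I_n * 'I_n}).
Proof. by split=> e f; rewrite inE. Qed.

Theorem lemma6 (R : realFieldType) (eps : R) (k n : nat)
  (E : {set 'I_n * 'I_n}) :
  0 < eps -> eps <= 1 ->
  d_monotone k E -> bip_expander eps E ->
  two_sided_bip_expander eps (symmetrize E) /\ d_monotone (2 * k)%N (symmetrize E).
Proof.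
move=> _ _ [Ms [HMs HE]] Hexp; split.
- split.
  + move=> S HS; apply: le_trans (Hexp S HS) _; rewrite ler_nat.
    apply: subset_leq_card; apply/subsetP => j; rewrite !inE.
    case/existsP => i /andP [iS ij]; apply/existsP; exists i.
    by rewrite iS inE ij.
  + move=> T HT; apply: le_trans (Hexp T HT) _; rewrite ler_nat.
    apply: subset_leq_card; apply/subsetP => j; rewrite !inE.
    case/existsP => i /andP [iS ij]; apply/existsP; exists i.
    by rewrite iS inE /= ij orbT.
- pose Ms' (t : 'I_(2 * k)) : {set 'I_n * 'I_n} :=
    match insub (val t) : option 'I_k with
    | Some s => Ms s
    | None => match insub (val t - k)%N : option 'I_k with
              | Some s => trs (Ms s)
              | None => set0 end end.
  exists Ms'; split.
  + move=> t; rewrite /Ms'; case: insubP => [s _ _|_]; first exact: HMs.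
    case: insubP => [s _ _|_]; [exact: tr_mono | exact: mono0].
  + apply/setP => p; rewrite inE HE; apply/idP/idP.
    * case/orP => /bigcupP [s _ Hs].
      - have lt : (val s < 2 * k)%N by move: (ltn_ord s); rewrite mul2n -addnn => h; apply: leq_trans h (leq_addr _ _).
        apply/bigcupP; exists (Ordinal lt) => //; rewrite /Ms' /=.
        by case: insubP => [s' _ /= /val_inj ->|]; rewrite ?ltn_ord.
      - have lt : (val s + k < 2 * k)%N by move: (ltn_ord s); rewrite mul2n -addnn ltn_add2r.
        apply/bigcupP; exists (Ordinal lt) => //; rewrite /Ms' /=.
        case: insubP => [s' /=|_]; first lia.
        rewrite addnK; case: insubP => [s' _ /= /val_inj ->|]; rewrite ?ltn_ord //.
        by rewrite inE.
    * case/bigcupP => t _; rewrite /Ms'.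
      case: insubP => [s _ _ Hs|_].
        by apply/orP; left; apply/bigcupP; exists s.
      case: insubP => [s _ _|_]; last by rewrite inE.
      rewrite inE => Hs; apply/orP; right; apply/bigcupP; exists s => //.
Qed.
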